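(* Let $(F,t)\in U$ with $t\neq0$, $Y=Y_{F,t}$, and $i\in\{1,2\}$. Then $D_i\setminus D_i^\circ=\Gamma_1\cup\Gamma_2$.
   Context: $U=U_0\times\mathbb{A}^1$, where $U_0$ is the space of cubic forms $F(x_0,\dots,x_3)$ such that the curve cut out by $F$ on the quadric $x_0x_3=x_1x_2$ in $\mathbb{P}^3$ is smooth, avoids $[0,0,0,1]$, and is tangent with multiplicity $2$ to the lines $x_0=x_1=0$ and $x_0=x_2=0$. $Y_{F,t}\subset\mathbb{P}^5$ is $x_4^3-F(x_0,\dots,x_3)+x_5(x_0x_3-x_1x_2)+t\,x_0x_5^2=0$, $F(Y)$ its Fano variety of lines, $p_0=[0,\dots,0,1]$. $C_i=(x_0=x_i=x_5=0)\cap(x_4^3=F)$, $\hat C_i\subset Y$ the cone over $C_i$ with vertex $p_0$, $\Gamma_i\subset F(Y)$ the set of lines $\overline{p_0p}$, $p\in C_i$. $D_i\subset F(Y)$ is the locus of lines meeting $\hat C_i$, and $D_i^\circ\subset D_i$ the subset of lines meeting $\hat C_i\setminus\{p_0\}$ in exactly one point. *)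

(* Defs.v *)
From HB Require Import structures.
From mathcomp Require Import all_boot all_order all_algebra.
From mathcomp Require Import mpoly.
Set Implicit Arguments. Unset Strict Implicit. Unset Printing Implicit Defensive.
Import GRing.Theory.
Local Open Scope ring_scope.

(* Ground field: K is an algebraically closed field of characteristic 0
   (stands for the complex numbers). Projective points are
   nonzero row vectors up to scaling; lines of P^5 are 2-dimensional
   K-subspaces of 'rV[K]_6. *)

Section Defs.
Variable K : closedFieldType.

Definition Qpoly : {mpoly K[4]} := 'X_0 * 'X_3 - 'X_1 * 'X_2.

Definition ev4 (p : {mpoly K[4]}) (x : 'rV[K]_4) : K := p.@[fun j => x ord0 j].

(* smoothness of the curve {Q = F = 0} in P^3 (Jacobian criterion for the
   complete intersection): at every point of the curve the gradients of Q and
   F are linearly independent *)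
Definition curve_smooth (F : {mpoly K[4]}) : Prop :=
  forall x : 'rV[K]_4, x != 0 -> ev4 Qpoly x = 0 -> ev4 F x = 0 ->
    forall a b : K,
      (forall j : 'I_4, a * ev4 (Qpoly^`M(j)) x + b * ev4 (F^`M(j)) x = 0) ->
      a = 0 /\ b = 0.

Definition curve_avoids_e3 (F : {mpoly K[4]}) : Prop :=
  ev4 F (\row_(j < 4) (if j == 3 :> nat then 1 else 0)) != 0.

Definition restr_line (F : {mpoly K[4]}) (P R : 'rV[K]_4) : {poly K} :=
  (map_mpoly polyC F).@[fun j => (P ord0 j)%:P + (R ord0 j)%:P * 'X].

(* intersection multiplicity at the point [P] of the curve {Q = F = 0} with a
   line of P^3 contained in Q, the line being spanned by P and R: order of
   vanishing at u = 0 of F(P + u R) *)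
Definition int_mult (F : {mpoly K[4]}) (P R : 'rV[K]_4) : nat :=
  mup 0 (restr_line F P R).

(* the curve {Q = F = 0} is tangent with multiplicity 2 to the line
   {x0 = xk = 0} (k = 1 or 2), which lies on Q: there is a point P of the
   line at which the intersection multiplicity of curve and line is 2 *)
Definition tangent_mult2 (F : {mpoly K[4]}) (k : 'I_4) : Prop :=
  exists P R : 'rV[K]_4,
    [/\ P ord0 0 = 0, P ord0 k = 0, R ord0 0 = 0 & R ord0 k = 0] /\
    [/\ P != 0, R \notin <[P]>%VS, ev4 F P = 0, restr_line F P R != 0
        & int_mult F P R = 2%N].

Definition inU0 (F : {mpoly K[4]}) : Prop :=
  [/\ F \is 3.-homog, curve_smooth F, curve_avoids_e3 F,
      tangent_mult2 F 1 & tangent_mult2 F 2].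

Definition crd (v : 'rV[K]_6) (k : nat) : K := v ord0 (@inord 5 k).

Definition proj4 (v : 'rV[K]_6) : 'rV[K]_4 :=
  \row_(j < 4) v ord0 (widen_ord (isT : (4 <= 6)%N) j).

Definition Yeq (F : {mpoly K[4]}) (t : K) (v : 'rV[K]_6) : K :=
  crd v 4 ^+ 3 - ev4 F (proj4 v) + crd v 5 * ev4 Qpoly (proj4 v)
  + t * crd v 0 * crd v 5 ^+ 2.

Definition e5 : 'rV[K]_6 := \row_(j < 6) (if j == 5 :> nat then 1 else 0).

Definition is_line (L : {vspace 'rV[K]_6}) : Prop := \dim L = 2%N.

Definition in_FY (F : {mpoly K[4]}) (t : K) (L : {vspace 'rV[K]_6}) : Prop :=
  is_line L /\ forall v, v \in L -> Yeq F t v = 0.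

(* affine cone of \hat C_i (cone over C_i with vertex p0) *)
Definition in_Chat (F : {mpoly K[4]}) (i : nat) (v : 'rV[K]_6) : Prop :=
  [/\ crd v 0 = 0, crd v i = 0 & crd v 4 ^+ 3 = ev4 F (proj4 v)].

Definition in_C (F : {mpoly K[4]}) (i : nat) (v : 'rV[K]_6) : Prop :=
  [/\ crd v 0 = 0, crd v i = 0, crd v 5 = 0 & crd v 4 ^+ 3 = ev4 F (proj4 v)].

Definition Gamma (F : {mpoly K[4]}) (i : nat) (L : {vspace 'rV[K]_6}) : Prop :=
  exists v : 'rV[K]_6, [/\ v != 0, in_C F i v & L = (<[e5]> + <[v]>)%VS].

Definition D (F : {mpoly K[4]}) (t : K) (i : nat) (L : {vspace 'rV[K]_6}) : Prop :=
  in_FY F t L /\ exists v, [/\ v \in L, v != 0 & in_Chat F i v].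

(* D_i^o : lines of D_i meeting \hat C_i \ {p0} in exactly one point *)
Definition Dcirc (F : {mpoly K[4]}) (t : K) (i : nat) (L : {vspace 'rV[K]_6}) : Prop :=
  D F t i L /\
  exists v, [/\ v \in L, v != 0, in_Chat F i v, v \notin <[e5]>%VS &
    forall w, w \in L -> w != 0 -> in_Chat F i w -> w \notin <[e5]>%VS ->
      w \in <[v]>%VS].

End Defs.

(* Main.v *)
Require Import Defs.
From HB Require Import structures.
From mathcomp Require Import all_boot all_order all_algebra.
From mathcomp Require Import mpoly ring.
From Stdlib Require Import Classical.
Set Implicit Arguments. Unset Strict Implicit. Unset Printing Implicit Defensive.
Import GRing.Theory.
Local Open Scope ring_scope.

Section V.
Variables (K : fieldType) (vT : vectType K).
Implicit Types (a b u : vT) (L : {vspace vT}).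

Lemma indep2 a b (x y : K) : a != 0 -> b \notin <[a]>%VS -> x *: a + y *: b = 0 ->
  x = 0 /\ y = 0.
Proof.
move=> a0 bn e.
have y0 : y = 0.
  apply/eqP/negPn/negP => y0; move/negP: bn; apply; apply/vlineP.
  exists (- x / y); apply: (scalerI y0).
  rewrite scalerA mulrCA mulfV // mulr1 scaleNr; apply/eqP.
  by rewrite -addr_eq0 addrC e.
split=> //; move: e; rewrite y0 scale0r addr0 => /eqP; rewrite scaler_eq0 (negbTE a0) orbF.
by move/eqP.
Qed.

Lemma dim2 a b : a != 0 -> b \notin <[a]>%VS -> \dim (<[a]> + <[b]>) = 2%N.
Proof.
move=> a0 bn; rewrite dimv_disjoint_sum; last first.
apply/eqP; rewrite -subv0; apply/subvP => u /memv_capP [/vlineP [x ->] /vlineP [y e]].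
case: (indep2 (x := x) (y := - y) a0 bn) => [|-> _].
  by rewrite e scaleNr subrr.
by rewrite scale0r mem0v.
rewrite !dim_vline a0; case: eqP bn => // ->; by rewrite mem0v.
Qed.

Lemma L2 L a b : \dim L = 2%N -> a \in L -> b \in L -> a != 0 -> b \notin <[a]>%VS ->
  L = (<[a]> + <[b]>)%VS.
Proof.
move=> dL aL bL a0 bn; apply/eqP; rewrite eq_sym eqEdim subv_add -!memvE aL bL dL dim2 //.
Qed.

Lemma mem2P u a b : reflect (exists x y, u = x *: a + y *: b) (u \in <[a]> + <[b]>)%VS.
Proof.
apply: (iffP memv_addP) => [[u1 /vlineP [x ->] [u2 /vlineP [y ->] ->]]|[x [y ->]]].
  by exists x, y.
by exists (x *: a); [apply/vlineP; exists x| exists (y *: b) => //; apply/vlineP; exists y].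
Qed.

End V.

Lemma stageA (K : closedFieldType) (q : {poly K}) (a b : K) :
  q != 0 -> mup 0 q = 2%N -> (forall s, q.[s] = (a + s * b) ^+ 3) -> False.
Proof.
move=> q0 hm hs.
have h2 : (2 <= mup 0 q)%N by rewrite hm.
have h3 : (mup 0 q <= 2)%N by rewrite hm.
rewrite mup_geq // polyC0 subr0 in h2.
rewrite mup_leq // polyC0 subr0 in h3.
case/dvdpP: h2 => q' hq.
have hq's s : q.[s] = q'.[s] * s ^+ 2 by rewrite hq hornerM hornerXn.
have ha : a = 0.
  by move: (hs 0); rewrite hq's expr0n /= mulr0 mul0r addr0 => /esym /eqP; rewrite expf_eq0 /= => /eqP.
subst a.
pose h := q' - (b ^+ 3)%:P * 'X.
have hh s : s != 0 -> h.[s] = 0.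
  move=> s0; rewrite /h hornerD hornerN hornerM hornerC hornerX.
  have E := hs s; rewrite hq's add0r in E.
  apply/eqP; rewrite subr_eq0; apply/eqP; apply: (mulIf (expf_neq0 2 s0)).
  rewrite E; ring.
have h0 : h = 0.
  apply/eqP/negPn/negP => hn.
  have : size (h * 'X + 1) != 1%N.
    rewrite size_addl ?size_mulX // ?size_polyC ?oner_eq0 //=.
    by rewrite eqSS size_poly_eq0.
    by rewrite ltnS lt0n size_poly_eq0.
  case/closed_rootP => x /rootP; rewrite hornerD hornerM hornerX hornerC.
  have [->|x0] := eqVneq x 0; first by rewrite mulr0 add0r => /eqP; rewrite oner_eq0.
  by rewrite hh // mul0r add0r => /eqP; rewrite oner_eq0.
move/negP: h3; apply.
have : q' = (b ^+ 3)%:P * 'X by apply/eqP; rewrite -subr_eq0 -/h h0.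
move=> e; rewrite hq e -mulrA -exprS; exact: dvdp_mull.
Qed.

Section H.
Variable K : closedFieldType.

Lemma ev4_scale (F : {mpoly K[4]}) c x : F \is 3.-homog ->
  ev4 F (c *: x) = c ^+ 3 * ev4 F x.
Proof.
move=> /dhomogP hF; rewrite /ev4 !mevalE big_distrr /= big_seq [RHS]big_seq.
apply: eq_bigr => m hm; rewrite mulrCA; congr (_ * _).
rewrite -[X in c ^+ X](hF m hm) /= mdegE -prodrXr -big_split /=.
by apply: eq_bigr => j _; rewrite mxE exprMn.
Qed.

Lemma ev4_0 (F : {mpoly K[4]}) : F \is 3.-homog -> ev4 F 0 = 0.
Proof. by move=> h; rewrite -(scale0r (0 : 'rV[K]_4)) ev4_scale // expr0n mul0r. Qed.

Lemma restr_eval (F : {mpoly K[4]}) P R u :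
  (restr_line F P R).[u] = ev4 F (P + u *: R).
Proof.
rewrite /restr_line /ev4; elim/mpolyind: F => [|c m p _ _ IH].
  by rewrite raddf0 meval0 horner0 meval0.
rewrite raddfD /= map_mpolyZ map_mpolyX !mevalD !mevalZ hornerD IH; congr (_ + _).
rewrite hornerM hornerC !mevalX; congr (_ * _).
rewrite -horner_evalE rmorph_prod; apply: eq_bigr => j _.
by rewrite rmorphXn /= horner_evalE !mxE hornerD hornerM hornerX !hornerC mulrC.
Qed.

Lemma proj4E (v : 'rV[K]_6) (j : 'I_4) : proj4 v ord0 j = crd v j.
Proof. by rewrite /proj4 /crd mxE; congr (v ord0 _); apply: val_inj; rewrite /= inordK // (ltn_trans (ltn_ord j)). Qed.

Lemma crdE (v : 'rV[K]_6) (j : 'I_6) : crd v j = v ord0 j.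
Proof. by rewrite /crd inord_val. Qed.

Lemma crdD (v w : 'rV[K]_6) k : crd (v + w) k = crd v k + crd w k.
Proof. by rewrite /crd mxE. Qed.
Lemma crdZ (v : 'rV[K]_6) c k : crd (c *: v) k = c * crd v k.
Proof. by rewrite /crd mxE. Qed.
Lemma crdN (v : 'rV[K]_6) k : crd (- v) k = - crd v k.
Proof. by rewrite /crd mxE. Qed.

Lemma crd_e5 k : (k < 6)%N -> crd (e5 K) k = if k == 5%N then 1 else 0.
Proof. by move=> hk; rewrite /crd /e5 mxE inordK. Qed.

Lemma proj4D (v w : 'rV[K]_6) : proj4 (v + w) = proj4 v + proj4 w.
Proof. by apply/rowP => j; rewrite !mxE. Qed.
Lemma proj4Z (v : 'rV[K]_6) c : proj4 (c *: v) = c *: proj4 v.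
Proof. by apply/rowP => j; rewrite !mxE. Qed.
Lemma proj4_e5 : proj4 (e5 K) = 0.
Proof. by apply/rowP => j; rewrite !mxE; case: j => [[|[|[|[|]]]] ?]. Qed.

Lemma evQ (x : 'rV[K]_4) : ev4 (Qpoly K) x = x ord0 0 * x ord0 3 - x ord0 1 * x ord0 2.
Proof. by rewrite /ev4 /Qpoly mevalB !mevalM !mevalXU. Qed.

Lemma evQ6 (v : 'rV[K]_6) : ev4 (Qpoly K) (proj4 v) = crd v 0 * crd v 3 - crd v 1 * crd v 2.
Proof. by rewrite evQ !proj4E. Qed.


Lemma e5_5 : crd (e5 K) 5 = 1.
Proof. by rewrite crd_e5. Qed.

Lemma e5_neq0 : e5 K != 0.
Proof. by apply/eqP => h; have := e5_5; rewrite h /crd mxE => /eqP; rewrite eq_sym oner_eq0. Qed.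

Lemma hi6 i : i = 1%N \/ i = 2%N -> crd (e5 K) i = 0.
Proof. by case=> ->; rewrite crd_e5. Qed.

Lemma notDcirc (F : {mpoly K[4]}) (t : K) i (L : {vspace 'rV[K]_6}) : i = 1%N \/ i = 2%N -> e5 K \in L -> ~ Dcirc F t i L.
Proof.
move=> hi eL [_ [v [vL v0 [c0 ci c4] vn H]]].
set w := v + e5 K.
have wC : in_Chat F i w.
  split; rewrite /w crdD.
  - by rewrite crd_e5 // addr0.
  - by rewrite hi6 // addr0.
  - by rewrite crd_e5 // addr0 proj4D proj4_e5 addr0.
have wn : w \notin <[e5 K]>%VS.
  apply: contra vn => /vlineP [c e]; apply/vlineP; exists (c - 1).
  by rewrite scalerBl scale1r -e /w addrK.
have w0 : w != 0.
  apply: contra vn => e; apply/vlineP; exists (-1); rewrite scaleN1r; apply/eqP.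
  by rewrite -addr_eq0.
have /vlineP [c e] := H w (memvD vL eL) w0 wC wn.
have e' : e5 K = (c - 1) *: v by rewrite scalerBl scale1r -e /w addrC addKr.
have [c1|c1] := eqVneq c 1.
  by move: e5_neq0; rewrite e' c1 subrr scale0r eqxx.
move/negP: vn; apply; apply/vlineP; exists (c - 1)^-1.
by rewrite e' scalerA mulVf ?scale1r // subr_eq0.
Qed.

Lemma gamma_D (F : {mpoly K[4]}) (t : K) i k (L : {vspace 'rV[K]_6}) : F \is 3.-homog -> i = 1%N \/ i = 2%N -> k = 1%N \/ k = 2%N ->
  Gamma F k L -> D F t i L.
Proof.
move=> hF hi hk [v [v0 [c0 ck c5 c4] ->]].
have vn : v \notin <[e5 K]>%VS.
  apply: contra v0 => /vlineP [c e]; move: c5; rewrite e crdZ e5_5 mulr1 => ->.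
  by rewrite scale0r.
split; last first.
  exists (e5 K); split; first by rewrite memvE addvSl.
    exact: e5_neq0.
  split; first by rewrite crd_e5.
    exact: hi6.
  by rewrite crd_e5 // proj4_e5 ev4_0 // expr0n.
split; first exact: (dim2 e5_neq0 vn).
move=> w /mem2P [x [y ->]].
rewrite /Yeq evQ6 !crdD !crdZ !crd_e5 // c0 c5 proj4D !proj4Z proj4_e5 scaler0 add0r.
rewrite ev4_scale // -c4.
case: hk ck => -> ->; rewrite /=; ring.
Qed.

Lemma proj4E' (v : 'rV[K]_6) n : (n < 4)%N -> proj4 v ord0 (inord n) = crd v n.
Proof. by move=> hn; rewrite proj4E inordK. Qed.

Lemma planeE i j (y y' : 'rV[K]_4) : (i = 1%N /\ j = 2%N) \/ (i = 2%N /\ j = 1%N) ->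
  y ord0 (inord 0) = 0 -> y ord0 (inord i) = 0 ->
  y' ord0 (inord 0) = 0 -> y' ord0 (inord i) = 0 ->
  y ord0 (inord j) = y' ord0 (inord j) -> y ord0 (inord 3) = y' ord0 (inord 3) -> y = y'.
Proof.
move=> hij a b c d e f; apply/matrixP => r l; have -> : r = ord0 by apply: val_inj; case: r => [[]].
rewrite -(inord_val l).
case: l => [[|[|[|[|m]]]] hl] //=; try congruence;
  case: hij a b c d e f => [[-> ->]|[-> ->]]; intros; congruence.
Qed.

Lemma e5_case (hchar : [pchar K] =i pred0) (F : {mpoly K[4]}) (t : K) (ht : t != 0)
  (L : {vspace 'rV[K]_6}) : in_FY F t L -> e5 K \in L -> Gamma F 1 L \/ Gamma F 2 L.
Proof.
case=> dL HY eL.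
have [w [wL wn]] : exists w, w \in L /\ w \notin <[e5 K]>%VS.
  apply: NNPP => Hn.
  have sub : (L <= <[e5 K]>)%VS.
    by apply/subvP => u uL; apply: NNPP => un; apply: Hn; exists u; split => //; apply/negP.
  by have := dimvS sub; rewrite dL dim_vline e5_neq0.
pose v := w - crd w 5 *: e5 K.
have v5 : crd v 5 = 0 by rewrite /v crdD crdN crdZ e5_5 mulr1 subrr.
have vL : v \in L by rewrite /v memvB // memvZ.
have v0 : v != 0.
  apply: contra wn => /eqP e; apply/vlineP; exists (crd w 5); apply/eqP.
  by rewrite -subr_eq0 -/v e.
clearbody v.
have vn : v \notin <[e5 K]>%VS.
  apply: contra v0 => /vlineP [c e]; move: v5; rewrite e crdZ e5_5 mulr1 => ->.
  by rewrite scale0r.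
have LE := L2 dL eL vL e5_neq0 vn.
pose f x := crd v 4 ^+ 3 - ev4 F (proj4 v) + x * (crd v 0 * crd v 3 - crd v 1 * crd v 2)
   + t * crd v 0 * x ^+ 2.
have fx x : f x = 0.
  rewrite -(HY (x *: e5 K + v)); last by rewrite memvD // memvZ.
  rewrite /f /Yeq evQ6 !crdD !crdZ !crd_e5 // v5 proj4D proj4Z proj4_e5 scaler0 add0r /=; ring.
have h2 : (2%:R : K) != 0 by rewrite ((pcharf0P _).1 hchar 2).
have hC : 2%:R * (t * crd v 0) = f 1 + f (-1) - 2%:R * f 0 by rewrite /f; ring.
have hB : 2%:R * (crd v 0 * crd v 3 - crd v 1 * crd v 2) = f 1 - f (-1) by rewrite /f; ring.
have hA : crd v 4 ^+ 3 - ev4 F (proj4 v) = f 0 by rewrite /f; ring.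
rewrite !fx subrr mulr0 subr0 addr0 in hC hB hA.
move/eqP: hC; rewrite mulf_eq0 (negbTE h2) /= mulf_eq0 (negbTE ht) /= => /eqP c0.
move/eqP: hB; rewrite mulf_eq0 (negbTE h2) /= c0 mul0r sub0r oppr_eq0 mulf_eq0.
move/eqP: hA; rewrite subr_eq0 => /eqP c4.
case/orP => /eqP c12; [left|right]; exists v; split => //.
Qed.

Lemma vertex (F : {mpoly K[4]}) (hF : F \is 3.-homog) i j (L : {vspace 'rV[K]_6})
  (hij : (i = 1%N /\ j = 2%N) \/ (i = 2%N /\ j = 1%N))
  (H : forall u, u \in L -> [/\ crd u 0 = 0, crd u i = 0 & crd u 4 ^+ 3 = ev4 F (proj4 u)])
  u : u \in L -> u != 0 -> crd u j = 0 -> crd u 3 = 0 -> e5 K \in L.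
Proof.
move=> uL u0 uj u3.
have hi4 : (i < 4)%N by case: hij => [[-> _]|[-> _]].
have hj4 : (j < 4)%N by case: hij => [[_ ->]|[_ ->]].
have [c0 ci c4] := H u uL.
have p0 : proj4 u = 0.
  apply: (planeE hij); rewrite ?proj4E' ?mxE //.
have u4 : crd u 4 = 0.
  by move: c4; rewrite p0 ev4_0 // => /eqP; rewrite expf_eq0 /= => /eqP.
have ue : u = crd u 5 *: e5 K.
  apply/matrixP => r l; have -> : r = ord0 by apply: val_inj; case: r => [[]].
  rewrite -(inord_val l); change (crd u l = crd (crd u 5 *: e5 K) l).
  have cl n : (n < 4)%N -> crd u n = 0 by move=> hn; rewrite -proj4E' // p0 mxE.
  case: l => [[|[|[|[|[|[|m]]]]]] hl] //=; rewrite crdZ crd_e5 //= ?mulr0 ?mulr1 //;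
   by rewrite cl.
have c5 : crd u 5 != 0 by apply: contra u0 => /eqP c5; rewrite ue c5 scale0r.
by have := memvZ (crd u 5)^-1 uL; rewrite {2}ue scalerA mulVf // scale1r.
Qed.


Lemma stageB (F : {mpoly K[4]}) (hF : F \is 3.-homog) i j (L : {vspace 'rV[K]_6})
  (hij : (i = 1%N /\ j = 2%N) \/ (i = 2%N /\ j = 1%N))
  (H : forall u, u \in L -> [/\ crd u 0 = 0, crd u i = 0 & crd u 4 ^+ 3 = ev4 F (proj4 u)])
  v w (vL : v \in L) (wL : w \in L) (v0 : v != 0) (wv : w \notin <[v]>%VS)
  (P R : 'rV[K]_4) (P0 : P ord0 (inord 0) = 0) (Pi : P ord0 (inord i) = 0)
  (R0 : R ord0 (inord 0) = 0) (Ri : R ord0 (inord i) = 0) :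
  e5 K \in L \/ exists p r, [/\ p \in L, r \in L, proj4 p = P & proj4 r = R].
Proof.
have hi4 : (i < 4)%N by case: hij => [[-> _]|[-> _]].
have hj4 : (j < 4)%N by case: hij => [[_ ->]|[_ ->]].
have [d0|d0] := eqVneq (crd v j * crd w 3 - crd v 3 * crd w j) 0.
  left.
  have [h|h] := boolP ((crd w 3 == 0) && (crd v 3 == 0)).
    case/andP: h => /eqP w3 /eqP v3.
    have [h'|h'] := boolP ((crd w j == 0) && (crd v j == 0)).
      case/andP: h' => /eqP wj /eqP vj.
      exact: (vertex hF hij H vL v0 vj v3).
    apply: (vertex hF hij H (u := crd w j *: v - crd v j *: w)).
    - by rewrite memvB // memvZ.
    - apply/negP => /eqP e; move/negP: h'; apply.
      case: (indep2 (x := crd w j) (y := - crd v j) v0 wv) => [|-> /eqP].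
        by rewrite scaleNr.
      by rewrite oppr_eq0 eqxx.
    - by rewrite crdD crdN !crdZ; ring.
    - by rewrite crdD crdN !crdZ w3 v3; ring.
  apply: (vertex hF hij H (u := crd w 3 *: v - crd v 3 *: w)).
  - by rewrite memvB // memvZ.
  - apply/negP => /eqP e; move/negP: h; apply.
    case: (indep2 (x := crd w 3) (y := - crd v 3) v0 wv) => [|-> /eqP].
      by rewrite scaleNr.
    by rewrite oppr_eq0 eqxx.
  - by rewrite crdD crdN !crdZ -[RHS]d0; ring.
  - by rewrite crdD crdN !crdZ; ring.
right.
pose mk (y : 'rV[K]_4) :=
  ((y ord0 (inord j) * crd w 3 - y ord0 (inord 3) * crd w j) /
     (crd v j * crd w 3 - crd v 3 * crd w j)) *: v +
  ((y ord0 (inord 3) * crd v j - y ord0 (inord j) * crd v 3) /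
     (crd v j * crd w 3 - crd v 3 * crd w j)) *: w.
have mkL (y : 'rV[K]_4) : mk y \in L by rewrite /mk memvD // memvZ.
have mkP (y : 'rV[K]_4) : y ord0 (inord 0) = 0 -> y ord0 (inord i) = 0 -> proj4 (mk y) = y.
  move=> y0 yi; have [c0 ci _] := H _ (mkL y).
  apply: (planeE hij); rewrite ?proj4E' //.
    by rewrite /mk crdD !crdZ; field.
  by rewrite /mk crdD !crdZ; field.
by exists (mk P), (mk R); rewrite !mkL !mkP.
Qed.

End H.

Unset Implicit Arguments.
Set Strict Implicit.

Theorem lemma5p8 (K : closedFieldType) (hchar : [pchar K] =i pred0)
  (F : {mpoly K[4]}) (t : K) (hU : inU0 F) (ht : t != 0)
  (i : nat) (hi : i = 1%N \/ i = 2%N) :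
  forall L : {vspace 'rV[K]_6},
    (D F t i L /\ ~ Dcirc F t i L) <-> (Gamma F 1 L \/ Gamma F 2 L).
Proof.
have [hF _ _ hT1 hT2] := hU.
move=> L; split.
- case=> hD hnD.
  have [eL|eL] := boolP (e5 K \in L).
    exact: (e5_case hchar ht hD.1 eL).
  exfalso; case: (hD) => hY [v [vL v0 vC]].
  have [w [wL w0 wC wn wv]] : exists w, [/\ w \in L, w != 0, in_Chat F i w,
      w \notin <[e5 K]>%VS & w \notin <[v]>%VS].
    apply: NNPP => Hn; apply: hnD; split => //; exists v; split => //.
      apply: contra eL => /vlineP [c e].
      have c0 : c != 0 by apply: contra v0 => /eqP c0; rewrite e c0 scale0r.
      by have := memvZ c^-1 vL; rewrite e scalerA mulVf // scale1r.
    move=> u uL u0 uC un; apply: NNPP => uv; apply: Hn; exists u; split => //.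
    exact/negP.
  have LE := L2 hY.1 vL wL v0 wv.
  have H : forall u, u \in L ->
      [/\ crd u 0 = 0, crd u i = 0 & crd u 4 ^+ 3 = ev4 F (proj4 u)].
    move=> u uL; have := uL; rewrite {1}LE => /mem2P [x [y ue]].
    case: vC => cv0 cvi _; case: wC => cw0 cwi _.
    have c0 : crd u 0 = 0 by rewrite ue crdD !crdZ cv0 cw0 !mulr0 addr0.
    have ci : crd u i = 0 by rewrite ue crdD !crdZ cvi cwi !mulr0 addr0.
    split => //; have := hY.2 u uL; rewrite /Yeq evQ6 c0.
    have -> : crd u 1 * crd u 2 = 0 by case: hi ci => -> ->; rewrite ?mul0r ?mulr0.
    move=> E; apply/eqP; rewrite -subr_eq0; apply/eqP; rewrite -[RHS]E; ring.
  pose j := if i == 1%N then 2%N else 1%N.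
  have hij : (i = 1%N /\ j = 2%N) \/ (i = 2%N /\ j = 1%N).
    by rewrite /j; case: hi => ->; [left|right].
  have e0 : (inord 0 : 'I_4) = 0 by apply: val_inj; rewrite /= inordK.
  have hT : tangent_mult2 F (inord i).
    case: hi => ->.
      have -> : (inord 1 : 'I_4) = 1 by apply: val_inj; rewrite /= inordK.
      exact: hT1.
    have -> : (inord 2 : 'I_4) = 2 by apply: val_inj; rewrite /= inordK.
    exact: hT2.
  case: hT => P [R [[P0 Pk R0 Rk] [_ _ _ q0 hm]]].
  rewrite -e0 in P0 R0.
  case: (stageB hF hij H vL wL v0 wv P0 Pk R0 Rk) => [eL'|[p [r [pL rL pP rR]]]].
    by rewrite eL' in eL.
  apply: (stageA q0 hm (a := crd p 4) (b := crd r 4)) => s.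
  rewrite restr_eval -pP -rR -proj4Z -proj4D.
  have [_ _ <-] := H _ (memvD pL (memvZ s rL)).
  by rewrite crdD crdZ.
- move=> hG.
  have hD : D F t i L.
    by case: hG => hG; [apply: (gamma_D t hF hi (or_introl erefl) hG)
                       |apply: (gamma_D t hF hi (or_intror erefl) hG)].
  split => //; apply: (notDcirc hi).
  by case: hG => -[v [_ _ ->]]; rewrite memvE addvSl.
Qed.
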